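(* Let $R$ be a ring with identity, ${}_RM$ a finitely generated semisimple left $R$-module, and $\varphi:M\to M$ an indecomposable nilpotent element of the ring $\mathrm{Hom}_R(M,M)$. Let $d=\dim_R(M)$ and let $n$ be the index of nilpotency of $\varphi$ ($\varphi^n=0\ne\varphi^{n-1}$). For $\psi\in\mathrm{Hom}_R(M,M)$ the following are equivalent: (1) $\psi\circ\varphi=\varphi\circ\psi$; (2) there exist an $R$-generating set $\{y_j\in M\mid1\le j\le d\}$ of ${}_RM$ and elements $a_1,\dots,a_n\in R$ such that for all $1\le j\le d$ \[a_1y_j+a_2\varphi(y_j)+\cdots+a_n\varphi^{n-1}(y_j)=\psi(y_j)\] and \[a_1\varphi(y_j)+a_2\varphi(\varphi(y_j))+\cdots+a_n\varphi^{n-1}(\varphi(y_j))=\psi(\varphi(y_j)).\]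
   Context: A nilpotent element $s$ of a ring $S$ is decomposable if $es=se$ for some idempotent $e\in S$ with $0\ne e\ne1$, and indecomposable otherwise. $\dim_R$ denotes composition length. *)

(* Defs.v *)
From HB Require Import structures.
From mathcomp Require Import all_boot all_order all_algebra.
Set Implicit Arguments. Unset Strict Implicit. Unset Printing Implicit Defensive.
Import GRing.Theory.
Local Open Scope ring_scope.

Section ModuleDefs.
Variables (R : nzRingType) (M : lmodType R).

Definition submodule (S : M -> Prop) : Prop :=
  [/\ S 0, (forall x y, S x -> S y -> S (x + y)) & (forall (r : R) x, S x -> S (r *: x))].

Definition semisimple_module : Prop :=
  forall S, submodule S ->
    exists T, [/\ submodule T,
                  (forall x, S x -> T x -> x = 0) &
                  (forall x, exists s t, [/\ S s, T t & x = s + t])].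

Definition generates (k : nat) (y : 'I_k -> M) : Prop :=
  forall x : M, exists c : 'I_k -> R, x = \sum_(i < k) c i *: y i.

Definition finitely_generated : Prop :=
  exists k (y : 'I_k -> M), generates y.

Definition same_set (S T : M -> Prop) : Prop := forall x, S x <-> T x.

(* M has a composition series of length d:
   0 = C 0 < C 1 < ... < C d = M, each C (i+1)/C i simple. *)
Definition comp_length (d : nat) : Prop :=
  exists C : nat -> M -> Prop,
    [/\ forall i, submodule (C i),
        same_set (C 0) (fun x => x = 0),
        same_set (C d) (fun _ => True),
        forall i, (i < d)%N -> (forall x, C i x -> C i.+1 x) /\ (exists x, C i.+1 x /\ ~ C i x)
      & forall i S, (i < d)%N -> submodule S ->
          (forall x, C i x -> S x) -> (forall x, S x -> C i.+1 x) ->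
          same_set S (C i) \/ same_set S (C i.+1)].

Definition indecomposable (phi : {linear M -> M}) : Prop :=
  ~ exists e : {linear M -> M},
      [/\ forall x, e (e x) = e x,
          exists x, e x != 0,
          exists x, e x != x
        & forall x, e (phi x) = phi (e x)].

End ModuleDefs.

(* Main.v *)
Require Import Defs.
From HB Require Import structures.
From mathcomp Require Import all_boot all_order all_algebra zify.
From Stdlib Require Import Classical ClassicalEpsilon.
Import GRing.Theory.
Local Open Scope ring_scope.

Section Chain.
Variables (R : nzRingType) (M : lmodType R).

Definition le_s (S T : M -> Prop) := forall x, S x -> T x.

Definition cs (A : M -> Prop) (d : nat) :=
  exists C : nat -> M -> Prop,
    [/\ forall i, submodule (C i),
        forall x, C 0%N x -> x = 0,
        same_set (C d) A,
        forall i, (i < d)%N -> le_s (C i) (C i.+1)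
      & forall i S, (i < d)%N -> submodule S ->
          le_s (C i) S -> le_s S (C i.+1) ->
          same_set S (C i) \/ same_set S (C i.+1)].

Definition schain (K : nat -> M -> Prop) (n : nat) :=
  (forall i, submodule (K i)) /\
  (forall i, (i < n)%N -> le_s (K i) (K i.+1) /\ exists x, K i.+1 x /\ ~ K i x).

Lemma schain_mono (K : nat -> M -> Prop) n : schain K n -> forall i j, (i <= j <= n)%N -> le_s (K i) (K j).
Proof.
move=> [_ st] i j /andP[]; elim: j => [|j IH].
  by rewrite leqn0 => /eqP-> _ x.
rewrite leq_eqVlt => /orP[/eqP-> _ x //|]; rewrite ltnS => hij hj x Kx.
by apply: (proj1 (st j hj)); apply: IH => //; apply: ltnW.
Qed.

Lemma sub_opp (S : M -> Prop) (x : M) : submodule S -> S x -> S (- x).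
Proof. by case=> _ _ hz Sx; rewrite -scaleN1r; apply: hz. Qed.

Lemma classic_min (P : nat -> Prop) : (exists j, P j) ->
  exists j, P j /\ forall i, (i < j)%N -> ~ P i.
Proof.
move=> [j Pj].
elim: j {-2}j (leqnn j) Pj => [|k IH] j hj Pj.
  exists j; split => // i; move: hj; rewrite leqn0 => /eqP->; by [].
destruct (classic (exists i, (i < j)%N /\ P i)) as [[i [hi Pi]]|H].
  apply: (IH i) => //; rewrite -ltnS; exact: leq_trans hi hj.
exists j; split => // i hi Pi; apply: H; by exists i.
Qed.

Lemma chain_bound d : forall A, cs A d -> forall n K, schain K n -> le_s (K n) A -> (n <= d)%N.
Proof.
elim: d => [|d IH] A [C [subC C0 Cd Cle Cmax]] n K [subK stK] KA.
  case: n stK KA => [//|n] stK KA.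
  have [_ [x [Kx nKx]]] := stK 0%N isT.
  have Kx' : K n.+1 x := @schain_mono K n.+1 (conj subK stK) 1%N n.+1 (leqnn n.+1) x Kx.
  have := C0 x (proj2 (Cd x) (KA _ Kx')) => x0; subst x.
  by exfalso; apply: nKx; case: (subK 0%N).
pose B := C d.
have csB : cs B d.
  exists C; split => // i hi; first by apply: Cle; exact: ltnW.
  move=> S hS h1 h2; apply: Cmax => //; exact: ltnW.
have BA : le_s B A by move=> x Bx; apply/(Cd x); apply: (Cle d) => //.
case: n stK KA => [//|m] stK KA.
have chK : schain K m.+1 by split.
destruct (classic (exists x, K m.+1 x /\ ~ B x)) as [Pn|nPn]; last first.
  suff h : (m.+1 <= d)%N by exact: leqW h.
  apply: (IH B csB m.+1 K chK) => x Kx; apply: NNPP => nB; apply: nPn; by exists x.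
have [j [[xj [Kxj nBxj]] minj]] := @classic_min (fun j => exists x, K j x /\ ~ B x) (ex_intro _ m.+1 Pn).
have jle : (j <= m.+1)%N.
  rewrite leqNgt; apply/negP => hlt; exact: (minj _ hlt Pn).
have KiB : forall i, (i < j)%N -> le_s (K i) B.
  move=> i hi x Kx; apply: NNPP => nB; apply: (minj i hi); by exists x.
have modst : forall l, (j <= l)%N -> (l < m.+1)%N ->
    exists x, (K l.+1 x /\ B x) /\ ~ K l x.
  move=> l hjl hl.
  pose S := fun x => exists a b, [/\ K l a, B b & x = a + b].
  have subS : submodule S.
    have [a0 aD aZ] := subK l; have [b0 bD bZ] := subC d.
    split.
    - by exists 0, 0; rewrite addr0.
    - move=> x y [a [b [Ka Bb ->]]] [a' [b' [Ka' Bb' ->]]].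
      exists (a + a'), (b + b'); split; [exact: aD|exact: bD|].
      by rewrite addrACA.
    - move=> r x [a [b [Ka Bb ->]]]; exists (r *: a), (r *: b); split;
        [exact: aZ|exact: bZ|by rewrite scalerDr].
  have h1 : le_s (C d) S.
    by move=> x Bx; exists 0, x; split => //; [case: (subK l)|rewrite add0r].
  have h2 : le_s S (C d.+1).
    move=> x [a [b [Ka Bb ->]]]; have [_ cD _] := subC d.+1.
    apply: cD; last by apply: (Cle d).
    apply/(Cd a); apply: KA; apply: (@schain_mono K m.+1 chK l m.+1 _ a Ka).
    by rewrite leqnn ltnW.
  case: (Cmax d S (ltnSn d) subS h1 h2) => [hSB|hSA].
    exfalso; apply: nBxj; apply/(hSB xj); exists xj, 0; split => //.
    - by apply: (@schain_mono K m.+1 chK j l _ xj Kxj); rewrite hjl ltnW.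
    - by case: (subC d).
    - by rewrite addr0.
  have [_ [w [Kw nKw]]] := stK l hl.
  have : S w.
    apply/(hSA w); apply/(Cd w); apply: KA; apply: (@schain_mono K m.+1 chK l.+1 m.+1 _ w Kw).
    by rewrite hl leqnn.
  move=> [a [b [Ka Bb ew]]].
  exists b; split; [split => //|].
  - have -> : b = w + - a by rewrite ew addrAC subrr add0r.
    have [_ kD _] := subK l.+1; apply: kD => //; apply: sub_opp => //.
    exact: (proj1 (stK l hl)).
  - move=> Kb; apply: nKw; rewrite ew; by case: (subK l) => _ kD _; apply: kD.
pose L := fun i => if (i < j)%N then K i else (fun x => K i.+1 x /\ B x).
have chL : schain L m.
  split.
    move=> i; rewrite /L; case: ifP => _ //.
    have [a0 aD aZ] := subK i.+1; have [b0 bD bZ] := subC d.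
    split => //.
    - by move=> x y [] ? ? [] ? ?; split; [apply: aD|apply: bD].
    - by move=> r x [] ? ?; split; [apply: aZ|apply: bZ].
  move=> i him; rewrite /L.
  case: (ltnP i.+1 j) => hij1.
    by rewrite (ltn_trans (ltnSn i) hij1); apply: stK; exact: ltnW him.
  case: (ltnP i j) => hij.
    have ej : j = i.+1 by apply/eqP; rewrite eqn_leq hij1 hij.
    subst j.
    have [x [[Kx Bx] nKx]] := modst i.+1 (leqnn _) him.
    split.
      move=> y Ky; split; last exact: (KiB i hij).
      apply: (@schain_mono K m.+1 chK i i.+2 _ y Ky); by rewrite leqW // ltnW.
    exists x; split => //; move=> Kix; apply: nKx.
    exact: (proj1 (stK i (ltnW him)) x Kix).
  have [x [[Kx Bx] nKx]] := modst i.+1 (leq_trans hij (leqnSn _)) him.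
  split.
    by move=> y [Ky By]; split => //; apply: (proj1 (stK i.+1 him)).
  by exists x; split => //; case.
suff : (m <= d)%N by [].
apply: (IH B csB m L chL).
rewrite /L => x; case: ifP => hm.
  exact: KiB.
by case.
Qed.

End Chain.
Section Cyc.
Variables (R : nzRingType) (M : lmodType R) (phi : {linear M -> M}).

Lemma iter0v i : iter i phi 0 = 0.
Proof. by elim: i => //= i ->; rewrite linear0. Qed.
Lemma iterDv i x y : iter i phi (x + y) = iter i phi x + iter i phi y.
Proof. by elim: i => //= i ->; rewrite linearD. Qed.
Lemma iterZv i (r : R) x : iter i phi (r *: x) = r *: iter i phi x.
Proof. by elim: i => //= i ->; rewrite linearZ. Qed.
Lemma iterNv i x : iter i phi (- x) = - iter i phi x.
Proof. by rewrite -scaleN1r iterZv scaleN1r. Qed.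
Lemma iterBv i x y : iter i phi (x - y) = iter i phi x - iter i phi y.
Proof. by rewrite iterDv iterNv. Qed.
Lemma iter_sumv i k (F : 'I_k -> M) : iter i phi (\sum_(j < k) F j) = \sum_(j < k) iter i phi (F j).
Proof. exact: (big_morph _ (iterDv i) (iter0v i)). Qed.

Lemma sub_sum (S : M -> Prop) k (F : 'I_k -> M) : submodule S ->
  (forall j, S (F j)) -> S (\sum_(j < k) F j).
Proof. move=> [S0 SD _] hF; apply: (big_ind S) => //. Qed.

Lemma sub_B (S : M -> Prop) x y : submodule S -> S x -> S y -> S (x - y).
Proof. by move=> [S0 SD SZ] Sx Sy; apply: SD => //; rewrite -scaleN1r; apply: SZ. Qed.

Lemma cyclic_gen (ssM : semisimple_module M) (indec : indecomposable phi) n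
  (nil_n : forall x, iter n phi x = 0) (nz : exists x, iter n.-1 phi x != 0) :
  exists y : M, forall x, exists r : nat -> R, x = \sum_(k < n) r k *: iter k phi y.
Proof.
case: n nil_n nz => [|m] nil_n [x0 hx0].
  by move: hx0; have := nil_n x0; rewrite /= => ->; rewrite eqxx.
rewrite /= in hx0.
have nilk : forall k x, (m.+1 <= k)%N -> iter k phi x = 0.
  by move=> k x h; rewrite -(subnK h) iterD nil_n iter0v.
pose K := fun x => iter m phi x = 0.
have subK : submodule K.
  split; rewrite /K.
  - exact: iter0v.
  - by move=> x y hx hy; rewrite iterDv hx hy addr0.
  - by move=> r x hx; rewrite iterZv hx scaler0.
have [T [subT KT0 KT]] := ssM K subK.
have [k [t [Kk Tt ex0]]] := KT x0.
have hz : iter m phi t != 0 by move: hx0; rewrite ex0 iterDv Kk add0r.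
pose y := t; pose z := iter m phi y.
have ann : forall r, r *: z = 0 -> r *: y = 0.
  move=> r h; apply: KT0; first by rewrite /K iterZv.
  by case: subT => _ _; apply.
pose Z := fun x => exists r, x = r *: z.
have subZ : submodule Z.
  split; first by exists 0; rewrite scale0r.
    by move=> a b [r ->] [r' ->]; exists (r + r'); rewrite scalerDl.
  by move=> a b [r ->]; exists (a * r); rewrite scalerA.
have [U [subU ZU0 ZU]] := ssM Z subZ.
pose C := fun x => exists r : nat -> R, x = \sum_(k < m.+1) r k *: iter k phi y.
pose W := fun x => forall i, (i < m.+1)%N -> U (iter i phi x).
have subC : submodule C.
  split.
  - by exists (fun _ => 0); rewrite big1 // => i _; rewrite scale0r.
  - move=> a b [r ->] [r' ->]; exists (fun k => r k + r' k).
    by rewrite -big_split /=; apply: eq_bigr => i _; rewrite scalerDl.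
  - move=> a b [r ->]; exists (fun k => a * r k).
    by rewrite scaler_sumr; apply: eq_bigr => i _; rewrite scalerA.
have subW : submodule W.
  have [U0 UD UZ] := subU.
  split.
  - by move=> i _; rewrite iter0v.
  - by move=> a b ha hb i hi; rewrite iterDv; apply: UD; [apply: ha|apply: hb].
  - by move=> r a ha i hi; rewrite iterZv; apply: UZ; apply: ha.
have hCf : forall k, C (iter k phi y).
  move=> kk; case: (ltnP kk m.+1) => hk; last first.
    by rewrite nilk //; case: subC.
  exists (fun j => if j == kk then 1 else 0).
  rewrite (bigD1 (Ordinal hk)) //= eqxx scale1r big1 ?addr0 // => j hj.
  have -> : (nat_of_ord j == kk) = false.
    by apply/negbTE; move: hj; apply: contra => /eqP h; apply/eqP/val_inj.
  by rewrite scale0r.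
have hCphi : forall x, C x -> C (phi x).
  move=> x [r ->]; rewrite linear_sum; apply: sub_sum => // j.
  rewrite linearZ /=; case: subC => _ _; apply; exact: (hCf j.+1).
have hWphi : forall x, W x -> W (phi x).
  move=> x Wx i hi; rewrite -iterSr.
  case: (ltnP i.+1 m.+1) => h; first exact: Wx.
  by rewrite nilk //; case: subU.
have decomp : forall x, exists c, C c /\ W (x - c).
  move=> x.
  have step : forall mm, (mm <= m.+1)%N -> exists c, C c /\
      forall i, (m.+1 - mm <= i)%N -> (i < m.+1)%N -> U (iter i phi (x - c)).
    elim => [|mm IHm] hmm.
      exists 0; split; first by case: subC.
      by move=> i h1 h2; exfalso; lia.
    have [c [Cc Uc]] := IHm (ltnW hmm).
    have [s [u [[r ->] Uu e]]] := ZU (iter (m - mm)%N phi (x - c)).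
    exists (c + r *: iter mm phi y); split.
      case: subC => _ CD CZ; apply: CD => //; apply: CZ; exact: hCf.
    move=> i h1 h2.
    have -> : x - (c + r *: iter mm phi y) = (x - c) - r *: iter mm phi y.
      by rewrite opprD addrA.
    rewrite iterBv iterZv -iterD.
    case: (eqVneq i (m - mm)%N) => hi.
      have -> : (i + mm = m)%N by lia.
      by rewrite hi e /z [_ + u]addrC addrK.
    move/eqP: hi => hi; rewrite (nilk (i + mm)%N y); last by lia.
    by rewrite scaler0 subr0; apply: Uc => //; lia.
  have [c [Cc Uc]] := step m.+1 (leqnn _).
  exists c; split => // i hi; apply: Uc => //; lia.
have uniq0 : forall c, C c -> W c -> c = 0.
  move=> c [r ->] Wc.
  have hr : forall mm, (mm <= m.+1)%N -> forall kk, (kk < mm)%N -> r kk *: y = 0.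
    elim => [|mm IH] hmm kk hk //.
    case: (ltnP kk mm) => hkm; first by apply: (IH (ltnW hmm)).
    have ekk : kk = mm by lia.
    subst kk; apply: ann; apply: ZU0; first by exists (r mm).
    have := Wc (m - mm)%N ltac:(lia).
    rewrite iter_sumv (bigD1 (Ordinal hmm)) //= iterZv -iterD.
    have -> : (m - mm + mm = m)%N by lia.
    rewrite big1 ?addr0 // => j hj.
    have hjm : nat_of_ord j != mm.
      by move: hj; apply: contra => /eqP h; apply/eqP/val_inj.
    rewrite iterZv -iterD.
    case: (ltnP j mm) => hjl.
      by rewrite -(iterZv (m - mm + j)%N (r j) y) iterD (IH (ltnW hmm) j hjl) !iter0v.
    by rewrite nilk ?scaler0 //; lia.
  rewrite big1 // => j _.
  by rewrite -iterZv (hr m.+1 (leqnn _) j (ltn_ord j)) iter0v.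
have ex : forall x, {c | C c /\ W (x - c)} :=
  fun x => constructive_indefinite_description _ (decomp x).
pose e := fun x => sval (ex x).
have eP : forall x, C (e x) /\ W (x - e x) := fun x => svalP (ex x).
have eU : forall x c, C c -> W (x - c) -> e x = c.
  move=> x c Cc Wc; apply/eqP; rewrite -subr_eq0; apply/eqP; apply: uniq0.
    apply: (@sub_B C _ _ subC) => //; exact: (proj1 (eP x)).
  have -> : e x - c = (x - c) - (x - e x).
    by rewrite opprB [RHS]addrC addrA subrK.
  apply: (@sub_B W _ _ subW) => //; exact: (proj2 (eP x)).
have elin : linear_for *:%R e.
  move=> a u v; apply: eU.
    case: subC => _ CD CZ; apply: CD; [apply: CZ|]; exact: (proj1 (eP _)).
  have -> : a *: u + v - (a *: e u + e v) = a *: (u - e u) + (v - e v).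
    by rewrite scalerBr opprD addrACA.
  case: subW => _ WD WZ; apply: WD; [apply: WZ|]; exact: (proj2 (eP _)).
pose eL : {linear M -> M} := HB.pack e (GRing.isLinear.Build _ _ _ _ e elin).
have W0 : W 0 by case: subW.
have all : forall x, e x = x.
  move=> x; apply: NNPP => hne; apply: indec; exists eL; split.
  - move=> v; apply: eU; first exact: (proj1 (eP v)).
    by rewrite subrr.
  - have ey : e y = y by apply: eU; [exact: (hCf 0%N)|rewrite subrr].
    exists y; change (e y != 0); rewrite ey.
    by apply/eqP => h0; move: hz; rewrite -/y h0 iter0v eqxx.
  - by exists x; apply/eqP.
  - move=> v /=; apply: eU; first by apply: hCphi; exact: (proj1 (eP v)).
    by rewrite -linearB; apply: hWphi; exact: (proj2 (eP v)).
exists y => x; rewrite -(all x); exact: (proj1 (eP x)).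
Qed.
End Cyc.

Theorem theorem4p8 (R : nzRingType) (M : lmodType R)
  (fgM : finitely_generated M) (ssM : semisimple_module M)
  (phi : {linear M -> M}) (indec : indecomposable phi)
  (d : nat) (hd : comp_length M d)
  (n : nat) (nil_n : forall x, iter n phi x = 0)
  (nz_n1 : exists x, iter n.-1 phi x != 0)
  (psi : {linear M -> M}) :
  (forall x, psi (phi x) = phi (psi x)) <->
  (exists (y : 'I_d -> M) (a : 'I_n -> R),
     generates y /\
     forall j : 'I_d,
       \sum_(i < n) a i *: iter i phi (y j) = psi (y j) /\
       \sum_(i < n) a i *: iter i phi (phi (y j)) = psi (phi (y j))).
Proof.
split.
- move=> hcomm.
  have [y hy] := @cyclic_gen R M phi ssM indec n nil_n nz_n1.
  have hnd : (n <= d)%N.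
    have [C [subC C0 Cd Cst Cmax]] := hd.
    pose K := fun i (x : M) => iter i phi x = 0.
    apply: (@chain_bound R M d (fun _ => True) _ n K _ _).
    + exists C; split => //.
      * by move=> x h; apply/(C0 x).
      * by move=> i hi; exact: (proj1 (Cst i hi)).
    + split.
        move=> i; split; rewrite /K.
        - exact: iter0v.
        - by move=> x y' hx hy'; rewrite iterDv hx hy' addr0.
        - by move=> r x hx; rewrite iterZv hx scaler0.
      move=> i hi; split.
        by move=> x hx; rewrite /K iterS hx linear0.
      have [x0 hx0] := nz_n1.
      exists (iter (n.-1 - i) phi x0); split.
        by rewrite /K -iterD; have -> : (i.+1 + (n.-1 - i) = n)%N by lia.
      rewrite /K -iterD => h; move/eqP: hx0; apply.
      by rewrite -h; have -> : (i + (n.-1 - i) = n.-1)%N by lia.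
    + by [].
  have [r hr] := hy (psi y).
  pose a := fun i : 'I_n => r i.
  have key : forall k, psi (iter k phi y) = \sum_(i<n) a i *: iter i phi (iter k phi y).
    move=> k.
    have -> : psi (iter k phi y) = iter k phi (psi y).
      by elim: k => //= k IH; rewrite hcomm IH.
    rewrite hr iter_sumv; apply: eq_bigr => i _; by rewrite iterZv -!iterD [(k + i)%N]addnC.
  exists (fun j : 'I_d => if (j < n)%N then iter j phi y else 0), a; split.
  + move=> x; have [c ->] := hy x; exists (fun j => c j).
    rewrite (big_ord_widen d (fun j => c j *: iter j phi y)) // big_mkcond.
    by apply: eq_bigr => j _ /=; case: ifP => _ //; rewrite scaler0.
  + move=> j; case: ifP => hj.
      split; first by rewrite key.
      by have -> : phi (iter j phi y) = iter j.+1 phi y by []; rewrite key.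
    by split; rewrite !linear0; apply: big1 => i _; rewrite iter0v scaler0.
- move=> [y [a [gen hj]]] x.
  have [c ->] := gen x.
  rewrite !linear_sum; apply: eq_bigr => j _; rewrite !linearZ /=; congr (_ *: _).
  rewrite -(proj2 (hj j)) -(proj1 (hj j)) linear_sum; apply: eq_bigr => i _.
  by rewrite linearZ /= -iterSr iterS.
Qed.
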